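(* Let $G$ be a vector group over $\Phi$ and $K$ a commutative associative unital $\Phi$-algebra. Then there exists a surjective homomorphism $\mathrm{Lie}(G)\otimes_\Phi K\to\mathrm{Lie}(\hat G_K)$.
   Context: $\Phi$ is a commutative unital ring. Given $\Phi$-modules $A,B$ and a $\Phi$-bilinear $\psi : A\times A\to B$, make $A\times B$ a group via $(a,b)(c,d) = (a+c,\, b+d+\psi(a,c))$, with scalar multiplications $\lambda\cdot_1(a,b) = (\lambda a,\lambda^2 b)$ and, only on $0\times B$, $\lambda\cdot_2(0,b) = (0,\lambda b)$; the same formulas with $\psi$ extended $K$-bilinearly make sense on $(A\otimes K)\times(B\otimes K)$ for a commutative associative unital $\Phi$-algebra $K$, $\lambda\in K$. A subgroup $G\le A\times B$ is an almost vector group if it is closed under $\lambda\cdot_1$ ($\lambda\in\Phi$) and $G_2:=G\cap(0\times B)$ is closed under $\lambda\cdot_2$ ($\lambda\in\Phi$). $\hat G(K)$ is the smallest subgroup of $(A\otimes K)\times(B\otimes K)$ containing the images of all $g\in G$, closed under $\lambda\cdot_1$ ($\lambda\in K$), whose intersection $\hat G(K)_2$ with $0\times(B\otimes K)$ is closed under $\lambda\cdot_2$ ($\lambda\in K$). A vector group is an almost vector group such that, if $1/2\notin\Phi$, the natural map $G_2\otimes_\Phi K\to\hat G(K)_2$ is surjective for all $K$. For a vector group $G$ over $\Phi$, $\hat G(K)$ is a vector group over $K$ (inside $(A\otimes K)\times(B\otimes K)$); $\hat G_K$ denotes the functor on commutative associative unital $K$-algebras $M\mapsto \widehat{\hat G(K)}(M)$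 associated to it. For a vector group $H$ over a ring $R$, $\mathrm{Lie}(H)$ is the kernel of the map $\hat H(R[\epsilon])\to\hat H(R)$ induced by $\epsilon\mapsto 0$ on the dual numbers $R[\epsilon]$ ($\epsilon^2=0$), i.e. the elements of the form $(\epsilon a,\epsilon b)$, an $R$-module; $\mathrm{Lie}(\hat G_K)$ is this construction applied to $\hat G(K)$ over $R=K$. *)

(* Defs.v *)
From HB Require Import structures.
From mathcomp Require Import all_boot all_algebra.
From Stdlib Require Import IndefiniteDescription.
Set Implicit Arguments. Unset Strict Implicit. Unset Printing Implicit Defensive.
Import GRing.Theory.
Local Open Scope ring_scope.

Record rmod (Sc : Type) := RMod {
  rcar :> Type;
  rzero : rcar;
  radd : rcar -> rcar -> rcar;
  ropp : rcar -> rcar;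
  rscale : Sc -> rcar -> rcar }.

Record ralg (R : Type) := RAlg {
  acar :> Type;
  azero : acar;
  aone : acar;
  aadd : acar -> acar -> acar;
  aopp : acar -> acar;
  amul : acar -> acar -> acar;
  ascale : R -> acar -> acar }.

Arguments rzero {Sc} r. Arguments radd {Sc} r _ _. Arguments ropp {Sc} r _.
Arguments rscale {Sc} r _ _.
Arguments azero {R} r. Arguments aone {R} r. Arguments aadd {R} r _ _.
Arguments aopp {R} r _. Arguments amul {R} r _ _. Arguments ascale {R} r _ _.

Definition rmod_of (R : pzRingType) (V : lmodType R) : rmod R :=
  @RMod R V 0 +%R (@GRing.opp V) (fun r v => r *: v).

Definition ralg_of (R : comPzRingType) (K : comAlgType R) : ralg R :=
  @RAlg R K 0 1 +%R (@GRing.opp K) *%R (fun r k => r *: k).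

Definition ralg_self (R : comPzRingType) : ralg R :=
  @RAlg R R 0 1 +%R (@GRing.opp R) *%R *%R.

(* dual numbers R[eps] = R + R eps, eps^2 = 0, represented as pairs (x, y) = x + y eps *)
Definition dual (R : comPzRingType) : ralg R :=
  @RAlg R (R * R)%type (0, 0) (1, 0)
    (fun x y => (x.1 + y.1, x.2 + y.2)) (fun x => (- x.1, - x.2))
    (fun x y => (x.1 * y.1, x.1 * y.2 + x.2 * y.1))
    (fun r x => (r * x.1, r * x.2)).

(* the algebra map R[eps] -> R, eps |-> 0 *)
Definition eps0 (R : comPzRingType) (x : acar (dual R)) : acar (ralg_self R) := x.1.

(* U is a submodule of the module V, given through an injection iota
   (iota = id for the full module).  An element of U (x)_R S is the class
   of a formal sum  sum_i u_i (x) s_i  (a list), two lists being identified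
   iff every R-bilinear map into every R-module takes the same value on them. *)
Section Tensor.
Variables (R : comPzRingType) (V : rmod R) (U : Type) (iota : U -> V) (S : ralg R).

Definition tbilin (M : lmodType R) (f : U -> S -> M) : Prop :=
  [/\ (forall u u' u'' s, iota u'' = radd V (iota u) (iota u') ->
          f u'' s = f u s + f u' s),
      (forall r u u' s, iota u' = rscale V r (iota u) -> f u' s = r *: f u s),
      (forall u s s', f u (aadd S s s') = f u s + f u s') &
      (forall r u s, f u (ascale S r s) = r *: f u s)].

Definition teqv (l1 l2 : seq (U * S)) : Prop :=
  forall (M : lmodType R) (f : U -> S -> M), tbilin f ->
    \sum_(p <- l1) f p.1 p.2 = \sum_(p <- l2) f p.1 p.2.

Record tens := Tens { tcl : seq (U * S) -> Prop; tclP : exists l, tcl = teqv l }.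

Definition tcls (l : seq (U * S)) : tens := @Tens (teqv l) (ex_intro _ l erefl).
Definition trep (x : tens) : seq (U * S) :=
  proj1_sig (constructive_indefinite_description _ (tclP x)).

Definition tzero : tens := tcls [::].
Definition tadd (x y : tens) : tens := tcls (trep x ++ trep y).
Definition topp (x : tens) : tens := tcls [seq (p.1, aopp S p.2) | p <- trep x].
Definition tscaleS (s : S) (x : tens) : tens :=
  tcls [seq (p.1, amul S s p.2) | p <- trep x].
Definition tscaleR (r : R) (x : tens) : tens :=
  tcls [seq (p.1, ascale S r p.2) | p <- trep x].

Definition trmod : rmod S := @RMod S tens tzero tadd topp tscaleS.
Definition trmodR : rmod R := @RMod R tens tzero tadd topp tscaleR.
End Tensor.

Definition T (R : comPzRingType) (V : rmod R) (S : ralg R) := tens (@id V) S.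
Definition tmod (R : comPzRingType) (V : rmod R) (S : ralg R) : rmod S :=
  trmod (@id V) S.

Definition psiS (R : comPzRingType) (V W : rmod R) (psi : V -> V -> W) (S : ralg R)
  (x y : T V S) : T W S :=
  tcls (@id W) [seq (psi p.1 q.1, amul S p.2 q.2) | p <- trep x, q <- trep y].

Definition tpush (R : comPzRingType) (V : rmod R) (S S' : ralg R) (f : S -> S')
  (x : T V S) : T V S' :=
  tcls (@id V) [seq (p.1, f p.2) | p <- trep x].

Section Group.
Variables (Sc : Type) (V W : rmod Sc) (psi : V -> V -> W).

Definition gone : V * W := (rzero V, rzero W).
Definition gmul (x y : V * W) : V * W :=
  (radd V x.1 y.1, radd W (radd W x.2 y.2) (psi x.1 y.1)).
Definition ginv (x : V * W) : V * W :=
  (ropp V x.1, radd W (ropp W x.2) (psi x.1 x.1)).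

Definition is_subgroup (H : V * W -> Prop) : Prop :=
  [/\ H gone, (forall x y, H x -> H y -> H (gmul x y)) & (forall x, H x -> H (ginv x))].

Definition closed_sc1 (H : V * W -> Prop) : Prop :=
  forall (l : Sc) x, H x -> H (rscale V l x.1, rscale W l (rscale W l x.2)).
Definition closed_sc2 (H : V * W -> Prop) : Prop :=
  forall (l : Sc) b, H (rzero V, b) -> H (rzero V, rscale W l b).

Definition almost_vector_group (H : V * W -> Prop) : Prop :=
  [/\ is_subgroup H, closed_sc1 H & closed_sc2 H].
End Group.

Definition hat (R : comPzRingType) (V W : rmod R) (psi : V -> V -> W)
  (G : V * W -> Prop) (S : ralg R) (x : T V S * T W S) : Prop :=
  forall H : T V S * T W S -> Prop,
    (forall g, G g -> H (tcls (@id V) [:: (g.1, aone S)], tcls (@id W) [:: (g.2, aone S)])) ->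
    @almost_vector_group S (tmod V S) (tmod W S) (@psiS R V W psi S) H ->
    H x.

Definition Lie (R : comPzRingType) (V W : rmod R) (psi : V -> V -> W)
  (G : V * W -> Prop) (x : T V (dual R) * T W (dual R)) : Prop :=
  @hat R V W psi G (dual R) x /\
  (tpush (@eps0 R) x.1, tpush (@eps0 R) x.2) =
    (tzero (@id V) (ralg_self R), tzero (@id W) (ralg_self R)).

Definition lie_rmod (R : comPzRingType) (V W : rmod R) : rmod R :=
  @RMod R (T V (dual R) * T W (dual R))%type
    (tzero (@id V) (dual R), tzero (@id W) (dual R))
    (fun x y => (tadd x.1 y.1, tadd x.2 y.2))
    (fun x => (topp x.1, topp x.2))
    (fun r x => (tscaleR r x.1, tscaleR r x.2)).

Definition bilinear_map (Phi : comPzRingType) (A B : lmodType Phi) (psi : A -> A -> B) :=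
  (forall a r c c', psi a (r *: c + c') = r *: psi a c + psi a c') /\
  (forall c r a a', psi (r *: a + a') c = r *: psi a c + psi a' c).

(* vector group: almost vector group such that, if 1/2 is not in Phi, the
   natural map G_2 (x) K -> \hat G(K)_2 is onto for all K; its image is the
   set of classes of sums  sum_i b_i (x) k_i  with (0,b_i) in G. *)
Definition vector_group (Phi : comPzRingType) (A B : lmodType Phi) (psi : A -> A -> B)
  (G : A * B -> Prop) : Prop :=
  @almost_vector_group Phi (rmod_of A) (rmod_of B) psi G /\
  ((~ exists h : Phi, h * 2 = 1) ->
   forall (K : comAlgType Phi) (y : T (rmod_of B) (ralg_of K)),
     @hat Phi (rmod_of A) (rmod_of B) psi G (ralg_of K)
         (tzero (@id (rmod_of A)) (ralg_of K), y) ->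
     exists l : seq (B * K),
       (forall p, List.In p l -> G (0, p.1)) /\ y = @tcls Phi (rmod_of B) _ id (ralg_of K) l).

Definition LieG (Phi : comPzRingType) (A B : lmodType Phi) (psi : A -> A -> B)
  (G : A * B -> Prop) := Lie (V := rmod_of A) (W := rmod_of B) psi G.

Definition LieG_tensor (Phi : comPzRingType) (A B : lmodType Phi) (psi : A -> A -> B)
  (G : A * B -> Prop) (K : comAlgType Phi) : Type :=
  tens (V := lie_rmod (rmod_of A) (rmod_of B))
       (fun x : {x | LieG psi G x} => proj1_sig x) (ralg_of K).

Definition GK_A (Phi : comPzRingType) (A : lmodType Phi) (K : comAlgType Phi) : rmod K :=
  tmod (rmod_of A) (ralg_of K).

Definition LieGK_rmod (Phi : comPzRingType) (A B : lmodType Phi) (K : comAlgType Phi)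
  : rmod K := lie_rmod (GK_A A K) (GK_A B K).

Definition LieGK (Phi : comPzRingType) (A B : lmodType Phi) (psi : A -> A -> B)
  (G : A * B -> Prop) (K : comAlgType Phi) : LieGK_rmod A B K -> Prop :=
  Lie (R := K) (V := GK_A A K) (W := GK_A B K)
      (@psiS Phi (rmod_of A) (rmod_of B) psi (ralg_of K))
      (@hat Phi (rmod_of A) (rmod_of B) psi G (ralg_of K)).

Arguments LieG_tensor {Phi A B} psi G K.
Arguments LieGK_rmod {Phi} A B K.
Arguments LieGK {Phi A B} psi G K _.
Arguments vector_group {Phi A B} psi G.
Arguments bilinear_map {Phi A B} psi.

(* Main.v *)
Require Import Defs.
From HB Require Import structures.
From mathcomp Require Import all_boot all_algebra.
From mathcomp Require Import boolp.
From mathcomp Require Import ring.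
From Stdlib Require Import ProofIrrelevance.
Set Implicit Arguments. Unset Strict Implicit. Unset Printing Implicit Defensive.
Import GRing.Theory.
Local Open Scope ring_scope.

Section TGen.
Variables (R : comPzRingType) (V : rmod R) (U : Type) (iota : U -> V) (S : ralg R).
Implicit Types (l : seq (U * S)) (x y : tens iota S).

Lemma teqv_refl l : teqv iota l l.
Proof. by move=> M f _. Qed.
Lemma teqv_sym l1 l2 : teqv iota l1 l2 -> teqv iota l2 l1.
Proof. by move=> h M f hf; rewrite (h M f hf). Qed.
Lemma teqv_trans l1 l2 l3 : teqv iota l1 l2 -> teqv iota l2 l3 -> teqv iota l1 l3.
Proof. by move=> h1 h2 M f hf; rewrite (h1 M f hf) (h2 M f hf). Qed.

Lemma tcls_eq l1 l2 : teqv iota l1 l2 -> tcls iota l1 = tcls iota l2.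
Proof.
move=> h; rewrite /tcls.
have E : teqv iota l1 = teqv iota l2.
  apply: funext => l; apply: propext; split => h'.
  - exact: teqv_trans (teqv_sym h) h'.
  - exact: teqv_trans h h'.
move: (ex_intro _ l1 _) (ex_intro _ l2 _); rewrite E => p1 p2.
by rewrite (proof_irrelevance _ p1 p2).
Qed.

Lemma tcls_inj l1 l2 : tcls iota l1 = tcls iota l2 -> teqv iota l1 l2.
Proof.
move=> h; have := f_equal (@tcl _ _ _ _ _) h => /= E.
by rewrite E; apply: teqv_refl.
Qed.

Lemma trep_spec x : tcl x = teqv iota (trep x).
Proof. unfold trep; by destruct (IndefiniteDescription.constructive_indefinite_description _ _). Qed.

Lemma tens_ext x y : tcl x = tcl y -> x = y.
Proof.
case: x => c p; case: y => c' p' /= E; move: p p'; rewrite E => p p'.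
by rewrite (proof_irrelevance _ p p').
Qed.

Lemma trepK x : tcls iota (trep x) = x.
Proof. by apply: tens_ext; rewrite /= trep_spec. Qed.

Lemma trepP l : teqv iota (trep (tcls iota l)) l.
Proof.
have E := trep_spec (tcls iota l); simpl in E.
have : teqv iota l l by exact: teqv_refl.
by rewrite E.
Qed.

Lemma tind x : exists l, x = tcls iota l.
Proof. by exists (trep x); rewrite trepK. Qed.

Lemma tadd_tcls l1 l2 : tadd (tcls iota l1) (tcls iota l2) = tcls iota (l1 ++ l2).
Proof.
apply: tcls_eq => M f hf; rewrite !big_cat /=.
by rewrite (trepP l1 hf) (trepP l2 hf).
Qed.

Lemma tzeroE : tzero iota S = tcls iota [::].
Proof. by []. Qed.

Definition tlift (M : lmodType R) (f : U -> S -> M) x : M := \sum_(p <- trep x) f p.1 p.2.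

Lemma tlift_tcls (M : lmodType R) (f : U -> S -> M) l :
  tbilin iota f -> tlift f (tcls iota l) = \sum_(p <- l) f p.1 p.2.
Proof. by move=> hf; rewrite /tlift (trepP l hf). Qed.

End TGen.

Lemma teqv_map (R : comPzRingType) (V V' : rmod R) (U U' : Type) (iota : U -> V) (iota' : U' -> V')
  (S S' : ralg R) (g : U * S -> U' * S') l1 l2 :
  (forall (M : lmodType R) (f : U' -> S' -> M), tbilin iota' f ->
      tbilin iota (fun u s => f (g (u, s)).1 (g (u, s)).2)) ->
  teqv iota l1 l2 -> teqv iota' (map g l1) (map g l2).
Proof.
move=> H h M f hf; rewrite !big_map.
have := h M _ (H M f hf).
have E : forall l, \sum_(p <- l) f (g p).1 (g p).2 =
   \sum_(p <- l) (fun u s => f (g (u, s)).1 (g (u, s)).2) p.1 p.2.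
  by move=> l; apply: eq_bigr => -[].
by rewrite !E.
Qed.

Lemma tmap_tcls (R : comPzRingType) (V V' : rmod R) (U U' : Type) (iota : U -> V) (iota' : U' -> V')
  (S S' : ralg R) (g : U * S -> U' * S') l :
  (forall (M : lmodType R) (f : U' -> S' -> M), tbilin iota' f ->
      tbilin iota (fun u s => f (g (u, s)).1 (g (u, s)).2)) ->
  tcls iota' (map g (trep (tcls iota l))) = tcls iota' (map g l).
Proof. by move=> H; apply: tcls_eq; apply: teqv_map H _; apply: trepP. Qed.

Section Bil.
Variables (R : comPzRingType) (V0 : lmodType R) (S : ralg R) (M : lmodType R).
Variable f : V0 -> S -> M.
Hypothesis hf : tbilin (@id (rmod_of V0)) f.

Lemma bil_addl u u' s : f (u + u') s = f u s + f u' s.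
Proof. by case: hf => h _ _ _; apply: h. Qed.
Lemma bil_scalel r u s : f (r *: u) s = r *: f u s.
Proof. by case: hf => _ h _ _; apply: h. Qed.
Lemma bil_addr u s s' : f u (aadd S s s') = f u s + f u s'.
Proof. by case: hf => _ _ h _; apply: h. Qed.
Lemma bil_scaler r u s : f u (ascale S r s) = r *: f u s.
Proof. by case: hf => _ _ _ h; apply: h. Qed.
Lemma bil0l s : f 0 s = 0.
Proof. by apply: (@addrI _ (f 0 s)); rewrite -bil_addl !addr0. Qed.
Lemma bil_suml (I : Type) (r : seq I) (g : I -> V0) s :
  f (\sum_(i <- r) g i) s = \sum_(i <- r) f (g i) s.
Proof.
elim: r => [|a r IH]; first by rewrite !big_nil bil0l.
by rewrite !big_cons bil_addl IH.
Qed.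
End Bil.

Lemma mk_tbilin (R : comPzRingType) (V0 : lmodType R) (S : ralg R) (M : lmodType R)
  (f : V0 -> S -> M) :
  (forall u u' s, f (u + u') s = f u s + f u' s) ->
  (forall r u s, f (r *: u) s = r *: f u s) ->
  (forall u s s', f u (aadd S s s') = f u s + f u s') ->
  (forall r u s, f u (ascale S r s) = r *: f u s) ->
  tbilin (@id (rmod_of V0)) f.
Proof. move=> h1 h2 h3 h4; split => [u u' u'' s /= ->|r u u' s /= ->|//|//]; [exact: h1|exact: h2]. Qed.

Lemma tsmap_tcls (R : comPzRingType) (V : rmod R) (U : Type) (iota : U -> V) (S S' : ralg R)
  (phi : S -> S') l :
  (forall s s', phi (aadd S s s') = aadd S' (phi s) (phi s')) ->
  (forall r s, phi (ascale S r s) = ascale S' r (phi s)) ->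
  tcls iota (map (fun p => (p.1, phi p.2)) (trep (tcls iota l))) =
  tcls iota (map (fun p => (p.1, phi p.2)) l).
Proof.
move=> ha hs; apply: tmap_tcls => M f [h1 h2 h3 h4]; split => /=.
- by move=> u u' u'' s E; apply: h1.
- by move=> r u u' s E; apply: h2.
- by move=> u s s'; rewrite ha h3.
- by move=> r u s; rewrite hs h4.
Qed.

Section TKsec.
Variables (Phi : comPzRingType) (A : lmodType Phi) (K : comAlgType Phi).
Local Notation Tt := (tens (@id (rmod_of A)) (ralg_of K)).
Local Notation tc := (tcls (@id (rmod_of A)) (S := ralg_of K)).
Implicit Types (l : seq (A * K)).

Lemma topp_tcls l : topp (tc l) = tc (map (fun p => (p.1, - p.2)) l).
Proof.
rewrite /topp; apply: (@tsmap_tcls _ _ _ _ (ralg_of K) (ralg_of K) (fun s : K => - s)) => /=.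
  by move=> s s'; rewrite opprD.
by move=> r s; rewrite scalerN.
Qed.

Lemma tscaleS_tcls (k : K) l : @tscaleS _ _ _ _ (ralg_of K) k (tc l) = tc (map (fun p => (p.1, k * p.2)) l).
Proof.
rewrite /tscaleS; apply: (@tsmap_tcls _ _ _ _ (ralg_of K) (ralg_of K) (fun s : K => k * s)) => /=.
  by move=> s s'; rewrite mulrDr.
by move=> r s; rewrite scalerAr.
Qed.

Lemma tk_addA : associative (@tadd _ _ _ _ (ralg_of K) : Tt -> Tt -> Tt).
Proof.
move=> x y z; case: (tind x) => l1 ->; case: (tind y) => l2 ->; case: (tind z) => l3 ->.
by rewrite !tadd_tcls catA.
Qed.

Lemma tk_addC : commutative (@tadd _ _ _ _ (ralg_of K) : Tt -> Tt -> Tt).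
Proof.
move=> x y; case: (tind x) => l1 ->; case: (tind y) => l2 ->.
rewrite !tadd_tcls; apply: tcls_eq => M f hf; by rewrite !big_cat /= addrC.
Qed.

Lemma tk_add0 : left_id (tzero (@id (rmod_of A)) (ralg_of K)) (@tadd _ _ _ _ (ralg_of K)).
Proof. by move=> x; case: (tind x) => l ->; rewrite tzeroE tadd_tcls. Qed.

Lemma tk_addN : left_inverse (tzero (@id (rmod_of A)) (ralg_of K)) (@topp _ _ _ _ (ralg_of K))
   (@tadd _ _ _ _ (ralg_of K)).
Proof.
move=> x; case: (tind x) => l ->; rewrite topp_tcls tadd_tcls tzeroE.
apply: tcls_eq => M f hf; rewrite big_cat big_map big_nil /=.
rewrite -big_split /= big1 // => p _.
have := bil_scaler hf (-1) p.1 p.2 => /=; rewrite scaleN1r => ->.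
by rewrite scaleN1r addNr.
Qed.

Definition TK := Tt.
HB.instance Definition _ := gen_eqMixin TK.
HB.instance Definition _ := gen_choiceMixin TK.
HB.instance Definition _ := GRing.isZmodule.Build TK tk_addA tk_addC tk_add0 tk_addN.

Lemma tk_scaleA (a b : K) (v : TK) : @tscaleS _ _ _ _ (ralg_of K) a (@tscaleS _ _ _ _ (ralg_of K) b v) = @tscaleS _ _ _ _ (ralg_of K) (a * b) v.
Proof. by case: (tind v) => l ->; rewrite !tscaleS_tcls -map_comp; congr tc; apply: eq_map => p /=; rewrite mulrA. Qed.

Lemma tk_scale1 : left_id (1 : K) (@tscaleS _ _ _ _ (ralg_of K) : K -> TK -> TK).
Proof. by move=> v; case: (tind v) => l ->; rewrite !tscaleS_tcls; congr tc; rewrite -[RHS]map_id; apply: eq_map => -[u s] /=; rewrite mul1r. Qed.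

Lemma tk_scaleDr : right_distributive (@tscaleS _ _ _ _ (ralg_of K) : K -> TK -> TK) +%R.
Proof.
move=> a x y.
change (@tscaleS _ _ _ _ (ralg_of K) a (tadd x y) = tadd (@tscaleS _ _ _ _ (ralg_of K) a x) (@tscaleS _ _ _ _ (ralg_of K) a y)).
case: (tind x) => l1 ->; case: (tind y) => l2 ->.
by rewrite [tadd (tc l1) _]tadd_tcls !tscaleS_tcls map_cat tadd_tcls.
Qed.

Lemma tk_scaleDl (v : TK) : {morph (@tscaleS _ _ _ _ (ralg_of K) : K -> TK -> TK)^~ v : a b / a + b}.
Proof.
move=> a b.
change (@tscaleS _ _ _ _ (ralg_of K) (a + b) v = tadd (@tscaleS _ _ _ _ (ralg_of K) a v) (@tscaleS _ _ _ _ (ralg_of K) b v)).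
case: (tind v) => l ->.
rewrite !tscaleS_tcls tadd_tcls; apply: tcls_eq => M f hf.
rewrite big_cat !big_map /= -big_split /=; apply: eq_bigr => p _.
by rewrite mulrDl (bil_addr hf).
Qed.

HB.instance Definition _ := GRing.Zmodule_isLmodule.Build K TK tk_scaleA tk_scale1 tk_scaleDr tk_scaleDl.

End TKsec.

Section Psi.
Variables (R : comPzRingType) (V W : lmodType R) (psi : V -> V -> W).
Hypothesis hpsi : bilinear_map psi.

Lemma psi0r a : psi a 0 = 0.
Proof. case: hpsi => h _; apply: (@addrI _ (psi a 0)); by rewrite addr0 -{1}(scale1r (psi a 0)) -h scale1r addr0. Qed.
Lemma psi0l a : psi 0 a = 0.
Proof. case: hpsi => _ h; apply: (@addrI _ (psi 0 a)); by rewrite addr0 -{1}(scale1r (psi 0 a)) -h scale1r addr0. Qed.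
Lemma psiDr a c c' : psi a (c + c') = psi a c + psi a c'.
Proof. by case: hpsi => h _; rewrite -{1}(scale1r c) h scale1r. Qed.
Lemma psiDl a a' c : psi (a + a') c = psi a c + psi a' c.
Proof. by case: hpsi => _ h; rewrite -{1}(scale1r a) h scale1r. Qed.
Lemma psiZr a r c : psi a (r *: c) = r *: psi a c.
Proof. by case: hpsi => h _; rewrite -[r *: c]addr0 h psi0r addr0. Qed.
Lemma psiZl a r c : psi (r *: a) c = r *: psi a c.
Proof. by case: hpsi => _ h; rewrite -[r *: a]addr0 h psi0l addr0. Qed.
Lemma psiNr a c : psi a (- c) = - psi a c.
Proof. by rewrite -scaleN1r psiZr scaleN1r. Qed.
Lemma psiNl a c : psi (- a) c = - psi a c.
Proof. by rewrite -scaleN1r psiZl scaleN1r. Qed.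
Lemma psiBr a c c' : psi a (c - c') = psi a c - psi a c'.
Proof. by rewrite psiDr psiNr. Qed.
Lemma psiBl a a' c : psi (a - a') c = psi a c - psi a' c.
Proof. by rewrite psiDl psiNl. Qed.
Lemma psi_sumr (I : Type) (r : seq I) a (F : I -> V) : psi a (\sum_(i <- r) F i) = \sum_(i <- r) psi a (F i).
Proof. elim: r => [|x r IH]; by rewrite ?big_nil ?psi0r // !big_cons psiDr IH. Qed.
Lemma psi_suml (I : Type) (r : seq I) c (F : I -> V) : psi (\sum_(i <- r) F i) c = \sum_(i <- r) psi (F i) c.
Proof. elim: r => [|x r IH]; by rewrite ?big_nil ?psi0l // !big_cons psiDl IH. Qed.

Variable (S : ralg R).
Hypothesis HmD1 : forall s t t', amul S s (aadd S t t') = aadd S (amul S s t) (amul S s t').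
Hypothesis HmD2 : forall s s' t, amul S (aadd S s s') t = aadd S (amul S s t) (amul S s' t).
Hypothesis HmZ1 : forall r s t, amul S s (ascale S r t) = ascale S r (amul S s t).
Hypothesis HmZ2 : forall r s t, amul S (ascale S r s) t = ascale S r (amul S s t).

Lemma psiS_tcls (l1 l2 : seq (rmod_of V * S)) :
  psiS (V := rmod_of V) (W := rmod_of W) psi (tcls (@id (rmod_of V)) l1) (tcls (@id (rmod_of V)) l2) =
  tcls (@id (rmod_of W)) [seq (psi p.1 q.1, amul S p.2 q.2) | p <- l1, q <- l2].
Proof.
rewrite /psiS; apply: tcls_eq => M f hf; rewrite !big_allpairs_dep /=.
have E2 : forall p : V * S, \sum_(q <- trep (tcls (@id (rmod_of V)) l2)) f (psi p.1 q.1) (amul S p.2 q.2)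
     = \sum_(q <- l2) f (psi p.1 q.1) (amul S p.2 q.2).
  move=> p.
  apply: (trepP l2 (f := fun u s => f (psi p.1 u) (amul S p.2 s))).
  apply: mk_tbilin => [u u' s|r u s|u s s'|r u s].
  - by rewrite psiDr (bil_addl hf).
  - by rewrite psiZr (bil_scalel hf).
  - by rewrite HmD1 (bil_addr hf).
  - by rewrite HmZ1 (bil_scaler hf).
rewrite (eq_bigr _ (fun p _ => E2 p)) exchange_big /=.
rewrite [RHS]exchange_big /=; apply: eq_bigr => q _.
apply: (trepP l1 (f := fun u s => f (psi u q.1) (amul S s q.2))).
apply: mk_tbilin => [u u' s|r u s|u s s'|r u s].
- by rewrite psiDl (bil_addl hf).
- by rewrite psiZl (bil_scalel hf).
- by rewrite HmD2 (bil_addr hf).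
- by rewrite HmZ2 (bil_scaler hf).
Qed.
End Psi.

Lemma sum_pair (R : comPzRingType) (V W : lmodType R) (I : Type) (r : seq I) (F : I -> V) (G : I -> W) :
  \sum_(i <- r) ((F i, G i) : (V * W)%type) = (\sum_(i <- r) F i, \sum_(i <- r) G i).
Proof. elim: r => [|a r IH]; by rewrite ?big_nil // !big_cons IH. Qed.

Section Dual.
Variables (R : comPzRingType) (V : lmodType R).
Local Notation TV := (tens (@id (rmod_of V)) (dual R)).
Local Notation tcV := (@tcls _ _ _ (@id (rmod_of V)) (dual R)).
Implicit Types (x y : TV) (l : seq (rmod_of V * dual R)).

Definition dfun (v : rmod_of V) (s : dual R) : (V * V)%type := (s.1 *: v, s.2 *: v).

Lemma dfun_bil : tbilin (@id (rmod_of V)) dfun.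
Proof.
apply: mk_tbilin => [u u' s|r u s|u s s'|r u s]; rewrite /dfun /=.
- by congr (_, _); rewrite /= scalerDr.
- by congr (_, _); rewrite /= !scalerA mulrC.
- by congr (_, _); rewrite /= scalerDl.
- by congr (_, _); rewrite /= scalerA.
Qed.

Definition dphi x : (V * V)%type := tlift dfun x.

Lemma dphi_tcls l : dphi (tcV l) = (\sum_(p <- l) p.2.1 *: p.1, \sum_(p <- l) p.2.2 *: p.1).
Proof. by rewrite /dphi (tlift_tcls _ dfun_bil) /dfun sum_pair. Qed.

Definition dpsi (a b : V) : TV := tcV [:: (a, (1, 0)); (b, (0, 1))].

Lemma dpsiK a b : dphi (dpsi a b) = (a, b).
Proof. by rewrite dphi_tcls !big_cons !big_nil /= !scale1r !scale0r !addr0 add0r. Qed.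

Lemma dphiK x : dpsi (dphi x).1 (dphi x).2 = x.
Proof.
case: (tind x) => l ->; rewrite dphi_tcls /dpsi; apply: tcls_eq => M f hf /=.
rewrite !big_cons big_nil addr0 !(bil_suml hf) -big_split /=.
apply: eq_bigr => -[u [a b]] _ /=.
rewrite !(bil_scalel hf) -!(bil_scaler hf) -(bil_addr hf) /=.
by rewrite !mulr1 !mulr0 addr0 add0r.
Qed.

Lemma dphi_inj x y : dphi x = dphi y -> x = y.
Proof. by move=> E; rewrite -(dphiK x) -(dphiK y) E. Qed.

Lemma dphi_add x y : dphi (tadd x y) = dphi x + dphi y.
Proof.
case: (tind x) => l1 ->; case: (tind y) => l2 ->.
by rewrite tadd_tcls !dphi_tcls !big_cat.
Qed.

Lemma dphi_zero : dphi (tzero (@id (rmod_of V)) (dual R)) = 0.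
Proof. by rewrite tzeroE dphi_tcls !big_nil. Qed.

Lemma dphi_opp x : dphi (topp x) = - dphi x.
Proof.
case: (tind x) => l ->; rewrite /topp.
rewrite (@tsmap_tcls _ _ _ _ (dual R) (dual R) (aopp (dual R))) /=.
- rewrite !dphi_tcls !big_map /=; congr (_, _); rewrite /= -sumrN; apply: eq_bigr => p _; by rewrite scaleNr.
- by move=> s s' /=; rewrite !opprD.
- by move=> r s /=; rewrite !mulrN.
Qed.

Lemma dphi_scaleS (lam : dual R) x :
  dphi (tscaleS lam x) = (lam.1 *: (dphi x).1, lam.1 *: (dphi x).2 + lam.2 *: (dphi x).1).
Proof.
case: (tind x) => l ->; rewrite /tscaleS.
rewrite (@tsmap_tcls _ _ _ _ (dual R) (dual R) (amul (dual R) lam)) /=.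
- rewrite !dphi_tcls !big_map /= !scaler_sumr -big_split /=; congr pair; apply: eq_bigr => p _.
    by rewrite scalerA.
  by rewrite scalerDl !scalerA.
- by move=> s s' /=; congr (_, _); ring.
- by move=> r s /=; congr (_, _); ring.
Qed.

Lemma dphi_scaleR (r : R) x : dphi (tscaleR r x) = r *: dphi x.
Proof.
case: (tind x) => l ->; rewrite /tscaleR.
rewrite (@tsmap_tcls _ _ _ _ (dual R) (dual R) (ascale (dual R) r)) /=.
- rewrite !dphi_tcls !big_map /=; congr (_, _); rewrite /= scaler_sumr; apply: eq_bigr => p _; by rewrite scalerA.
- by move=> s s' /=; congr (_, _); ring.
- by move=> r' s /=; congr (_, _); ring.
Qed.

Lemma dphi_gen v : dphi (tcV [:: (v, aone (dual R))]) = (v, 0).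
Proof. by rewrite dphi_tcls !big_cons !big_nil /= scale1r scale0r !addr0. Qed.

Definition sfun (v : rmod_of V) (s : ralg_self R) : V := s *: v.
Lemma sfun_bil : tbilin (@id (rmod_of V)) sfun.
Proof.
apply: mk_tbilin => [u u' s|r u s|u s s'|r u s]; rewrite /sfun /=.
- by rewrite scalerDr.
- by rewrite !scalerA mulrC.
- by rewrite scalerDl.
- by rewrite scalerA.
Qed.

Lemma push_tcls l : tpush (@eps0 R) (tcV l) =
   tcls (@id (rmod_of V)) (S := ralg_self R) (map (fun p => (p.1, p.2.1)) l).
Proof.
rewrite /tpush (@tsmap_tcls _ _ _ _ (dual R) (ralg_self R) (@eps0 R)) //.
Qed.

Lemma push0P x : tpush (@eps0 R) x = tzero (@id (rmod_of V)) (ralg_self R) <-> (dphi x).1 = 0.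
Proof.
case: (tind x) => l ->; rewrite push_tcls dphi_tcls tzeroE /=; split.
- move=> E0; have E := tcls_inj E0; have := E _ _ sfun_bil; rewrite big_nil big_map /sfun /=.
  by [].
- move=> E; apply: tcls_eq => M f hf; rewrite big_nil big_map /=.
  have -> : \sum_(p <- l) f p.1 p.2.1 = f (\sum_(p <- l) p.2.1 *: p.1) 1.
    rewrite (bil_suml hf); apply: eq_bigr => p _.
    by rewrite (bil_scalel hf) -(bil_scaler hf) /= mulr1.
  by rewrite E (bil0l hf).
Qed.

End Dual.

Section HatGen.
Variables (R : comPzRingType) (V W : rmod R) (psi : V -> V -> W) (G : V * W -> Prop) (S : ralg R).
Local Notation H := (hat psi G (S := S)).

Lemma hat_gen g : G g -> H (tcls (@id V) [:: (g.1, aone S)], tcls (@id W) [:: (g.2, aone S)]).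
Proof. by move=> Gg H' Hg _; apply: Hg. Qed.

Lemma hat_avg : @almost_vector_group S (tmod V S) (tmod W S) (@psiS R V W psi S) H.
Proof.
split; [split|..].
- by move=> H' _ [[]].
- by move=> x y hx hy H' Hg hH; case: (hH) => [[_ hm _] _ _]; apply: hm; [apply: hx|apply: hy].
- by move=> x hx H' Hg hH; case: (hH) => [[_ _ hi] _ _]; apply: hi; apply: hx.
- by move=> l x hx H' Hg hH; case: (hH) => [_ hs _]; apply: hs; apply: hx.
- by move=> l b hx H' Hg hH; case: (hH) => [_ _ hs]; apply: hs; apply: hx.
Qed.

Lemma hat_min (X : T V S * T W S -> Prop) :
  (forall g, G g -> X (tcls (@id V) [:: (g.1, aone S)], tcls (@id W) [:: (g.2, aone S)])) ->
  @almost_vector_group S (tmod V S) (tmod W S) (@psiS R V W psi S) X ->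
  forall x, H x -> X x.
Proof. by move=> h1 h2 x hx; apply: hx. Qed.
End HatGen.

Section DualGroup.
Variables (R : comPzRingType) (V W : lmodType R) (psi : V -> V -> W).
Hypothesis hpsi : bilinear_map psi.
Local Notation TV := (T (rmod_of V) (dual R)).
Local Notation TW := (T (rmod_of W) (dual R)).
Local Notation PS := (@psiS R (rmod_of V) (rmod_of W) psi (dual R)).
Local Notation gm := (@gmul _ (tmod (rmod_of V) (dual R)) (tmod (rmod_of W) (dual R)) PS).
Local Notation gi := (@ginv _ (tmod (rmod_of V) (dual R)) (tmod (rmod_of W) (dual R)) PS).

Let p0r := psi0r hpsi. Let p0l := psi0l hpsi. Let pDr := psiDr hpsi. Let pDl := psiDl hpsi.
Let pZr := psiZr hpsi. Let pZl := psiZl hpsi. Let pNr := psiNr hpsi. Let pNl := psiNl hpsi.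
Let pBr := psiBr hpsi. Let pBl := psiBl hpsi.

Definition cd (x : TV * TW) := (dphi x.1, dphi x.2).
Definition mk (a1 a2 : V) (b1 b2 : W) : TV * TW := (dpsi a1 a2, dpsi b1 b2).

Lemma cd_inj x y : cd x = cd y -> x = y.
Proof. case: x y => [x1 x2] [y1 y2] [/dphi_inj -> /dphi_inj ->] //. Qed.

Lemma cd_mk a1 a2 b1 b2 : cd (mk a1 a2 b1 b2) = ((a1, a2), (b1, b2)).
Proof. by rewrite /cd /mk /= !dpsiK. Qed.

Lemma dual_HmD1 (s t t' : dual R) : amul (dual R) s (aadd (dual R) t t') = aadd (dual R) (amul (dual R) s t) (amul (dual R) s t').
Proof. by rewrite /=; congr (_, _); ring. Qed.
Lemma dual_HmD2 (s s' t : dual R) : amul (dual R) (aadd (dual R) s s') t = aadd (dual R) (amul (dual R) s t) (amul (dual R) s' t).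
Proof. by rewrite /=; congr (_, _); ring. Qed.
Lemma dual_HmZ1 r (s t : dual R) : amul (dual R) s (ascale (dual R) r t) = ascale (dual R) r (amul (dual R) s t).
Proof. by rewrite /=; congr (_, _); ring. Qed.
Lemma dual_HmZ2 r (s t : dual R) : amul (dual R) (ascale (dual R) r s) t = ascale (dual R) r (amul (dual R) s t).
Proof. by rewrite /=; congr (_, _); ring. Qed.

Lemma dphi_psiS x y :
  dphi (PS x y) = (psi (dphi x).1 (dphi y).1, psi (dphi x).1 (dphi y).2 + psi (dphi x).2 (dphi y).1).
Proof.
rewrite -{1}(dphiK x) -{1}(dphiK y) /dpsi.
rewrite (psiS_tcls hpsi dual_HmD1 dual_HmD2 dual_HmZ1 dual_HmZ2) dphi_tcls.
rewrite !big_allpairs_dep !big_cons !big_nil /=.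
rewrite !mulr0 !mulr1 !add0r !addr0 !scale0r !scale1r !addr0 !add0r.
by rewrite addrC.
Qed.


Lemma cd_gmul x y a1 a2 b1 b2 c1 c2 d1 d2 :
  cd x = ((a1, a2), (b1, b2)) -> cd y = ((c1, c2), (d1, d2)) ->
  cd (gm x y) = ((a1 + c1, a2 + c2), (b1 + d1 + psi a1 c1, b2 + d2 + (psi a1 c2 + psi a2 c1))).
Proof.
case: x => x1 x2; case: y => y1 y2; rewrite /cd /= => -[E1 E2] [E3 E4].
by rewrite !dphi_add dphi_psiS E1 E2 E3 E4.
Qed.

Lemma cd_ginv x a1 a2 b1 b2 :
  cd x = ((a1, a2), (b1, b2)) ->
  cd (gi x) = ((- a1, - a2), (- b1 + psi a1 a1, - b2 + (psi a1 a2 + psi a2 a1))).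
Proof.
case: x => x1 x2; rewrite /cd /= => -[E1 E2].
by rewrite dphi_add !dphi_opp dphi_psiS E1 E2.
Qed.

Lemma cd_sc1 (lam : dual R) x a1 a2 b1 b2 :
  cd x = ((a1, a2), (b1, b2)) ->
  cd (rscale (tmod (rmod_of V) (dual R)) lam x.1,
      rscale (tmod (rmod_of W) (dual R)) lam (rscale (tmod (rmod_of W) (dual R)) lam x.2)) =
  ((lam.1 *: a1, lam.1 *: a2 + lam.2 *: a1),
   (lam.1 *: (lam.1 *: b1), lam.1 *: (lam.1 *: b2 + lam.2 *: b1) + lam.2 *: (lam.1 *: b1))).
Proof.
case: x => x1 x2; rewrite /cd /= => -[E1 E2].
by rewrite !dphi_scaleS E1 E2.
Qed.

Lemma cd_sc2 (lam : dual R) b b1 b2 :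
  dphi b = (b1, b2) ->
  cd (rzero (tmod (rmod_of V) (dual R)), rscale (tmod (rmod_of W) (dual R)) lam b) =
  ((0, 0), (lam.1 *: b1, lam.1 *: b2 + lam.2 *: b1)).
Proof. by move=> E; rewrite /cd /= dphi_scaleS dphi_zero E. Qed.

Lemma cd_gone : cd (gone (tmod (rmod_of V) (dual R)) (tmod (rmod_of W) (dual R))) = ((0, 0), (0, 0)).
Proof. by rewrite /cd /= !dphi_zero. Qed.

Lemma cd_gen (g : rmod_of V * rmod_of W) :
  cd (tcls (@id (rmod_of V)) [:: (g.1, aone (dual R))], tcls (@id (rmod_of W)) [:: (g.2, aone (dual R))])
  = ((g.1, 0), (g.2, 0)).
Proof. by rewrite /cd /= !dphi_gen. Qed.

Lemma tzero_dual : tzero (@id (rmod_of V)) (dual R) = dpsi 0 0.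
Proof. by apply: dphi_inj; rewrite dpsiK dphi_zero. Qed.

Section Lie.
Variable H0 : rmod_of V * rmod_of W -> Prop.
Local Notation hatD := (@hat R (rmod_of V) (rmod_of W) psi H0 (dual R)).

Lemma hatD_avg : @almost_vector_group (dual R) (tmod (rmod_of V) (dual R)) (tmod (rmod_of W) (dual R)) PS hatD.
Proof. exact: hat_avg. Qed.

Lemma hatD_eq x y : hatD x -> cd x = cd y -> hatD y.
Proof. by move=> h /cd_inj <-. Qed.

Lemma lie_zero : hatD (mk 0 0 0 0).
Proof.
case: hatD_avg => [[h _ _] _ _]; apply: hatD_eq h _.
by rewrite cd_gone cd_mk.
Qed.

Lemma lie_add u v u' v' : hatD (mk 0 u 0 v) -> hatD (mk 0 u' 0 v') -> hatD (mk 0 (u + u') 0 (v + v')).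
Proof.
move=> h h'; case: hatD_avg => [[_ hm _] _ _]; apply: hatD_eq (hm _ _ h h') _.
rewrite (cd_gmul (cd_mk _ _ _ _) (cd_mk _ _ _ _)) cd_mk.
by rewrite !p0l !p0r !addr0.
Qed.

Lemma lie_gen1 g (k : R) : H0 g ->
  hatD (mk 0 (k *: g.1) 0 (k *: (g.2 + g.2 - psi g.1 g.1))).
Proof.
move=> Hg; have hs := @hat_gen R (rmod_of V) (rmod_of W) psi H0 (dual R) g Hg.
case: hatD_avg => [[_ hm hi] hs1 _].
have h1 := hs1 (1, k) _ hs.
apply: hatD_eq (hm _ _ h1 (hi _ hs)) _.
rewrite (cd_gmul (cd_sc1 _ (cd_gen g)) (cd_ginv (cd_gen g))) cd_mk /=.
rewrite ?scale1r ?scaler0 ?oppr0 ?add0r ?addr0 ?p0r ?p0l ?addr0 ?add0r ?pNr ?pZl ?pZr ?subrr.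
by rewrite addrA addrN add0r subrr scalerBr scalerDr.
Qed.

Lemma lie_gen2 g (k : R) : H0 g -> g.1 = 0 -> hatD (mk 0 0 0 (k *: g.2)).
Proof.
move=> Hg E; have hs := @hat_gen R (rmod_of V) (rmod_of W) psi H0 (dual R) g Hg.
case: hatD_avg => [_ _ hs2].
have E' : tcls (@id (rmod_of V)) [:: (g.1, aone (dual R))] = rzero (tmod (rmod_of V) (dual R)).
  by apply: dphi_inj; rewrite dphi_gen dphi_zero E.
move: hs; rewrite E' => hs.
apply: hatD_eq (hs2 (0, k) _ hs) _.
rewrite (cd_sc2 _ (dphi_gen _)) cd_mk /=.
by rewrite scale0r scaler0 add0r.
Qed.

End Lie.

End DualGroup.

Section TExt.
Variables (R : comPzRingType) (W : lmodType R).
Definition TE := (R * W)%type.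
HB.instance Definition _ := GRing.Zmodule.on TE.
Definition te_mul (x y : TE) : TE := (x.1 * y.1, x.1 *: y.2 + y.1 *: x.2).
Definition te_one : TE := (1, 0).
Lemma te_mulA : associative te_mul.
Proof.
move=> [a x] [b y] [c z]; rewrite /te_mul /=; congr (_, _); first by rewrite mulrA.
by rewrite !scalerDr !scalerA -addrA (mulrC a c) (mulrC b c).
Qed.
Lemma te_mulC : commutative te_mul.
Proof. by move=> [a x] [b y]; rewrite /te_mul /= mulrC addrC. Qed.
Lemma te_mul1 : left_id te_one te_mul.
Proof. by move=> [a x]; rewrite /te_mul /= mul1r scale1r scaler0 addr0. Qed.
Lemma te_mulDl : left_distributive te_mul +%R.
Proof.
move=> [a x] [b y] [c z]; rewrite /te_mul /=; congr (_, _); first by rewrite mulrDl.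
by rewrite scalerDl scalerDr addrACA.
Qed.
HB.instance Definition _ := GRing.Zmodule_isComPzRing.Build TE te_mulA te_mulC te_mul1 te_mulDl.

Definition emb (w : W) : TE := (0, w).
Definition cst (r : R) : TE := (r, 0).
Lemma emb_inj a b : emb a = emb b -> a = b.
Proof. by case. Qed.
Lemma embD a b : emb (a + b) = emb a + emb b.
Proof. by rewrite /emb; congr (_, _); rewrite /= addr0. Qed.
Lemma embN a : emb (- a) = - emb a.
Proof. by rewrite /emb; congr (_, _); rewrite /= oppr0. Qed.
Lemma emb0 : emb 0 = 0.
Proof. by []. Qed.
Lemma embZ r a : emb (r *: a) = cst r * emb a.
Proof. by rewrite /emb /cst; congr (_, _); rewrite /= ?mulr0 // scaler0 addr0. Qed.
Lemma cstD r s : cst (r + s) = cst r + cst s.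
Proof. by rewrite /cst; congr (_, _); rewrite /= addr0. Qed.
Lemma cstM r s : cst (r * s) = cst r * cst s.
Proof. by rewrite /cst; congr (_, _); rewrite /= !scaler0 addr0. Qed.
Lemma cstN r : cst (- r) = - cst r.
Proof. by rewrite /cst; congr (_, _); rewrite /= oppr0. Qed.
Lemma cst1 : cst 1 = 1.
Proof. by []. Qed.
Lemma cst0 : cst 0 = 0.
Proof. by []. Qed.
End TExt.

Ltac modeq := apply: emb_inj; rewrite ?(embD, embN, emb0, embZ, cstM, cstD, cstN, cst1, cst0); ring.

Example ex1 (R : comPzRingType) (W : lmodType R) (a b : W) (r s : R) :
  r *: (a + b) - s *: a = (r - s) *: a + r *: b.
Proof. modeq. Qed.

Section GX.
Variables (R : comPzRingType) (V W : lmodType R) (psi : V -> V -> W).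
Hypothesis hpsi : bilinear_map psi.
Let p0r := psi0r hpsi. Let p0l := psi0l hpsi. Let pDr := psiDr hpsi. Let pDl := psiDl hpsi.
Let pZr := psiZr hpsi. Let pZl := psiZl hpsi. Let pNr := psiNr hpsi. Let pNl := psiNl hpsi.
Let pBr := psiBr hpsi. Let pBl := psiBl hpsi.
Local Notation TV := (T (rmod_of V) (dual R)).
Local Notation TW := (T (rmod_of W) (dual R)).
Local Notation PS := (@psiS R (rmod_of V) (rmod_of W) psi (dual R)).

Variable H0 : rmod_of V * rmod_of W -> Prop.
Hypothesis hH0 : @almost_vector_group R (rmod_of V) (rmod_of W) psi H0.
Local Notation hatD := (@hat R (rmod_of V) (rmod_of W) psi H0 (dual R)).

Variable I : V -> W -> Prop.
Hypothesis I0 : I 0 0.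
Hypothesis ID : forall u v u' v', I u v -> I u' v' -> I (u + u') (v + v').
Hypothesis IZ : forall r u v, I u v -> I (r *: u) (r *: v).
Hypothesis Ic : forall u v g, I u v -> H0 g -> I 0 (psi u g.1 - psi g.1 u).
Hypothesis Iv : forall u v k, I u v -> I 0 (k *: v).
Hypothesis Ig : forall g, H0 g -> I g.1 (g.2 + g.2 - psi g.1 g.1).
Hypothesis I2 : forall g k, H0 g -> g.1 = 0 -> I 0 (k *: g.2).

Lemma Iu0 u v : I u v -> I u 0.
Proof. move=> h; have := ID h (Iv (-1) h); by rewrite addr0 scaleN1r subrr. Qed.

Definition GXs (x : TV * TW) := exists g, H0 g /\ exists u v, I u v /\
   cd x = ((g.1, u), (g.2, v + psi g.1 u)).

Lemma GXs_avg : @almost_vector_group (dual R) (tmod (rmod_of V) (dual R)) (tmod (rmod_of W) (dual R)) PS GXs.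
Proof.
case: hH0 => [[h0 hm hi] hs1 hs2].
split; [split|..].
- exists (0, 0); split; first exact: h0.
  exists 0, 0; split=> //; rewrite cd_gone /=; by rewrite p0r addr0.
- move=> x y [g [Hg [u [v [Iuv Ex]]]]] [g' [Hg' [u' [v' [Iuv' Ey]]]]].
  exists (gmul (V := rmod_of V) (W := rmod_of W) psi g g'); split; first exact: hm.
  exists (u + u'), (v + v' + (psi u g'.1 - psi g'.1 u)); split.
    by have := ID (ID Iuv Iuv') (Ic Iuv Hg'); rewrite addr0.
  rewrite (cd_gmul hpsi Ex Ey) /=; congr (_, _); congr (_, _).
  rewrite !pDl !pDr; modeq.
- move=> x [g [Hg [u [v [Iuv Ex]]]]].
  exists (ginv (V := rmod_of V) (W := rmod_of W) psi g); split; first exact: hi.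
  exists (- u), (- v + (psi u g.1 - psi g.1 u)); split.
    by have := ID (IZ (-1) Iuv) (Ic Iuv Hg); rewrite !scaleN1r addr0.
  rewrite (cd_ginv hpsi Ex) /=; congr (_, _); congr (_, _).
  rewrite ?pDl ?pDr ?pNl ?pNr; modeq.
- move=> lam x [g [Hg [u [v [Iuv Ex]]]]].
  exists (lam.1 *: g.1, lam.1 *: (lam.1 *: g.2)); split; first exact: (hs1 lam.1 g Hg).
  exists (lam.1 *: u + lam.2 *: g.1),
         ((lam.1 * lam.1) *: v + (lam.1 * lam.2) *: (g.2 + g.2 - psi g.1 g.1)); split.
    have Hs := ID (ID (IZ lam.1 (Iu0 Iuv)) (Iv (lam.1 * lam.1) Iuv))
                  (ID (IZ lam.2 (Iu0 (Ig Hg))) (Iv (lam.1 * lam.2) (Ig Hg))).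
    by move: Hs; rewrite !scaler0 !addr0 !add0r.
  rewrite (cd_sc1 lam Ex) /=; congr (_, _); congr (_, _).
  rewrite ?pDl ?pDr ?pZl ?pZr ?pBr ?pBl; modeq.
- move=> lam b [g [Hg [u [v [Iuv Ex]]]]].
  move: Ex; rewrite /cd /= dphi_zero => -[[E1 E2] E3].
  exists (0, lam.1 *: g.2); split.
    apply: hs2; suff -> : (rzero (rmod_of V), g.2) = g by [].
    by move: E1; case: g {Hg E3 Iuv} => g1 g2 /= <-.
  exists 0, (lam.1 *: v + lam.2 *: g.2); split.
    by rewrite -[0]addr0; apply: ID; [apply: Iv Iuv|apply: I2].
  rewrite (@cd_sc2 _ V _ lam _ _ _ E3) /=; congr (_, _); congr (_, _).
  by rewrite -E1 -E2 !p0r !addr0.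
Qed.

Lemma GX x : hatD x -> GXs x.
Proof.
apply: hat_min; last exact: GXs_avg.
move=> g Hg; exists g; split=> //; exists 0, 0; split=> //.
by rewrite cd_gen /= p0r addr0.
Qed.

Lemma GX_lie x : hatD x -> (dphi x.1).1 = 0 -> (dphi x.2).1 = 0 ->
  exists u v, I u v /\ cd x = ((0, u), (0, v)).
Proof.
move=> /GX [g [Hg [u [v [Iuv Ex]]]]] E1 E2.
have [Ea Eb] : dphi x.1 = (g.1, u) /\ dphi x.2 = (g.2, v + psi g.1 u) by case: Ex => -> ->.
rewrite Ea /= in E1; rewrite Eb /= in E2.
exists u, v; split => //; by rewrite /cd Ea Eb E1 E2 p0l addr0.
Qed.
End GX.

Section PhiLevel.
Variables (Phi : comPzRingType) (A B : lmodType Phi) (psi : A -> A -> B) (G : A * B -> Prop).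
Hypothesis hpsi : bilinear_map psi.
Hypothesis hGa : @almost_vector_group Phi (rmod_of A) (rmod_of B) psi G.
Let p0r := psi0r hpsi. Let p0l := psi0l hpsi. Let pDr := psiDr hpsi. Let pDl := psiDl hpsi.
Let pZr := psiZr hpsi. Let pZl := psiZl hpsi. Let pNr := psiNr hpsi. Let pNl := psiNl hpsi.
Let pBr := psiBr hpsi. Let pBl := psiBl hpsi.

Inductive S0 : A -> B -> Prop :=
  | S0_0 : S0 0 0
  | S0_D u v u' v' : S0 u v -> S0 u' v' -> S0 (u + u') (v + v')
  | S0_Z r u v : S0 u v -> S0 (r *: u) (r *: v)
  | S0_g (g : A * B) : G g -> S0 g.1 (g.2 + g.2 - psi g.1 g.1)
  | S0_b b : G (0, b) -> S0 0 b.

Lemma G2k b k : G (0, b) -> G (0, k *: b).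
Proof. by case: hGa => _ _ h; apply: h. Qed.

Lemma G2w (g : A * B) : G g -> G (0, g.2 + g.2 - psi g.1 g.1).
Proof.
case: hGa => [[_ hm hi] hs1 _] Hg.
have H1 := hs1 (1 + 1) g Hg.
have H2 := hm _ _ H1 (hi _ (hm _ _ Hg Hg)).
suff <- : gmul (V := rmod_of A) (W := rmod_of B) psi
   ((1 + 1) *: g.1, (1 + 1) *: ((1 + 1) *: g.2))
   (ginv (V := rmod_of A) (W := rmod_of B) psi (gmul (V := rmod_of A) (W := rmod_of B) psi g g)) =
   (0, g.2 + g.2 - psi g.1 g.1) by [].
rewrite /gmul /ginv /=; congr (_, _).
  modeq.
rewrite ?(pDl, pDr, pNl, pNr, pZl, pZr); modeq.
Qed.

Lemma Gc (g g' : A * B) : G g -> G g' -> G (0, psi g.1 g'.1 - psi g'.1 g.1).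
Proof.
case: hGa => [[_ hm hi] _ _] Hg Hg'.
have H2 := hm _ _ (hm _ _ Hg Hg') (hi _ (hm _ _ Hg' Hg)).
suff <- : gmul (V := rmod_of A) (W := rmod_of B) psi (gmul (V := rmod_of A) (W := rmod_of B) psi g g')
   (ginv (V := rmod_of A) (W := rmod_of B) psi (gmul (V := rmod_of A) (W := rmod_of B) psi g' g)) =
   (0, psi g.1 g'.1 - psi g'.1 g.1) by [].
rewrite /gmul /ginv /=; congr (_, _).
  modeq.
rewrite ?(pDl, pDr, pNl, pNr, pZl, pZr); modeq.
Qed.

Lemma S0_v u v k : S0 u v -> S0 0 (k *: v).
Proof.
move=> h; elim: h k => {u v}.
- by move=> k; rewrite scaler0; exact: S0_0.
- by move=> u v u' v' _ IH _ IH' k; rewrite scalerDr -[0]addr0; apply: S0_D.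
- by move=> r u v _ IH k; rewrite scalerA; apply: IH.
- by move=> g Hg k; apply: S0_b; apply: G2k; apply: G2w.
- by move=> b Hb k; apply: S0_b; apply: G2k.
Qed.

Lemma S0_c u v (g : A * B) : S0 u v -> G g -> S0 0 (psi u g.1 - psi g.1 u).
Proof.
move=> h Hg; elim: h => {u v}.
- by rewrite p0l p0r subrr; exact: S0_0.
- move=> u v u' v' _ IH _ IH'.
  have -> : psi (u + u') g.1 - psi g.1 (u + u') = (psi u g.1 - psi g.1 u) + (psi u' g.1 - psi g.1 u').
    by rewrite pDl pDr; modeq.
  by rewrite -[0]addr0; apply: S0_D.
- move=> r u v _ IH.
  have -> : psi (r *: u) g.1 - psi g.1 (r *: u) = r *: (psi u g.1 - psi g.1 u).
    by rewrite pZl pZr; modeq.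
  by rewrite -(scaler0 _ r); apply: S0_Z.
- by move=> g' Hg'; apply: S0_b; apply: Gc.
- by move=> b Hb; rewrite p0l p0r subrr; exact: S0_0.
Qed.

Local Notation LieGp := (LieG psi G).

Lemma Lie_S0 x : LieGp x -> exists u v, S0 u v /\ cd x = ((0, u), (0, v)).
Proof.
case=> hx E; have E1 := f_equal fst E; have E2 := f_equal snd E; simpl in E1, E2.
apply: (GX_lie hpsi hGa (I := S0)) => //.
- exact: S0_0.
- by move=> *; apply: S0_D.
- by move=> *; apply: S0_Z.
- by move=> u v g h Hg; exact: S0_c h Hg.
- by move=> u v k h; apply: S0_v h.
- by move=> g Hg; apply: S0_g.
- move=> g k Hg E0; apply: S0_b; apply: G2k; case: g Hg E0 => g1 g2 /= Hg E0; by rewrite E0 in Hg.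
- by apply/push0P.
- by apply/push0P.
Qed.

Lemma S0_hat u v : S0 u v -> forall k, @hat Phi (rmod_of A) (rmod_of B) psi G (dual Phi) (mk (k *: 0) (k *: u) (k *: 0) (k *: v)).
Proof.
move=> h; elim: h => {u v}.
- by move=> k; rewrite !scaler0; apply: lie_zero.
- move=> u v u' v' _ IH _ IH' k; rewrite !scaler0 !scalerDr.
  by apply: (lie_add hpsi); [move: (IH k)|move: (IH' k)]; rewrite !scaler0.
- by move=> r u v _ IH k; rewrite !scaler0 !scalerA; move: (IH (k * r)); rewrite !scaler0.
- by move=> g Hg k; rewrite !scaler0; apply: (lie_gen1 hpsi).
- move=> b Hb k; rewrite !scaler0.
  by have := lie_gen2 (psi := psi) (g := (0, b)) k Hb erefl.
Qed.

Lemma S0_lie u v : S0 u v -> LieGp (mk 0 u 0 v).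
Proof.
move=> h; split.
  by have := S0_hat h 1; rewrite !scale1r.
by rewrite /mk /=; congr (_, _); apply/push0P; rewrite dpsiK.
Qed.

End PhiLevel.

Definition tt (Phi : comPzRingType) (A : lmodType Phi) (K : comAlgType Phi) (u : A) (k : K) : TK A K :=
  tcls (@id (rmod_of A)) (S := ralg_of K) [:: ((u : rmod_of A), (k : ralg_of K))].

Section TT.
Variables (Phi : comPzRingType) (A : lmodType Phi) (K : comAlgType Phi).
Local Notation tt := (@tt Phi A K).

Lemma TK_addE (x y : TK A K) : x + y = tadd x y. Proof. by []. Qed.
Lemma TK_scaleE (k : K) (x : TK A K) : k *: x = @tscaleS _ _ _ _ (ralg_of K) k x. Proof. by []. Qed.
Lemma TK_zeroE : (0 : TK A K) = tcls (@id (rmod_of A)) [::]. Proof. by []. Qed.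

Lemma ttD1 u u' k : tt (u + u') k = tt u k + tt u' k.
Proof.
rewrite TK_addE /tt tadd_tcls; apply: tcls_eq => M f hf.
by rewrite !big_cons !big_nil /= !addr0 (bil_addl hf).
Qed.
Lemma ttZ1 r u k : tt (r *: u) k = tt u (r *: k).
Proof.
rewrite /tt; apply: tcls_eq => M f hf.
rewrite !big_cons !big_nil /= !addr0 (bil_scalel hf).
by have := bil_scaler hf r u k => /= ->.
Qed.
Lemma ttD2 u k k' : tt u (k + k') = tt u k + tt u k'.
Proof.
rewrite TK_addE /tt tadd_tcls; apply: tcls_eq => M f hf.
rewrite !big_cons !big_nil /= !addr0.
by have := bil_addr hf u k k' => /= ->.
Qed.
Lemma ttK c u k : c *: tt u k = tt u (c * k).
Proof. by rewrite TK_scaleE /tt tscaleS_tcls. Qed.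
Lemma tt0 k : tt 0 k = 0.
Proof.
rewrite TK_zeroE /tt; apply: tcls_eq => M f hf.
by rewrite !big_cons !big_nil /= addr0 (bil0l hf).
Qed.
Lemma ttN u k : tt (- u) k = - tt u k.
Proof. by apply: (@addrI _ (tt u k)); rewrite -ttD1 !subrr tt0. Qed.
Lemma tt_cons (p : rmod_of A * ralg_of K) (l : seq (rmod_of A * ralg_of K)) : tcls (@id (rmod_of A)) (S := ralg_of K) (p :: l) = tt p.1 p.2 + tcls (@id (rmod_of A)) l.
Proof. by rewrite TK_addE /tt tadd_tcls; case: p. Qed.
Lemma ttk0 u : tt u 0 = 0.
Proof. by rewrite -(scale0r (tt u 1)) ttK mul0r. Qed.
End TT.

Section PsiK.
Variables (Phi : comPzRingType) (A B : lmodType Phi) (psi : A -> A -> B) (K : comAlgType Phi).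
Hypothesis hpsi : bilinear_map psi.
Definition psiK : TK A K -> TK A K -> TK B K := @psiS Phi (rmod_of A) (rmod_of B) psi (ralg_of K).

Lemma K_HmD1 (s t t' : ralg_of K) : amul (ralg_of K) s (aadd (ralg_of K) t t') = aadd (ralg_of K) (amul (ralg_of K) s t) (amul (ralg_of K) s t').
Proof. exact: mulrDr. Qed.
Lemma K_HmD2 (s s' t : ralg_of K) : amul (ralg_of K) (aadd (ralg_of K) s s') t = aadd (ralg_of K) (amul (ralg_of K) s t) (amul (ralg_of K) s' t).
Proof. exact: mulrDl. Qed.
Lemma K_HmZ1 r (s t : ralg_of K) : amul (ralg_of K) s (ascale (ralg_of K) r t) = ascale (ralg_of K) r (amul (ralg_of K) s t).
Proof. by rewrite /= scalerAr. Qed.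
Lemma K_HmZ2 r (s t : ralg_of K) : amul (ralg_of K) (ascale (ralg_of K) r s) t = ascale (ralg_of K) r (amul (ralg_of K) s t).
Proof. by rewrite /= scalerAl. Qed.

Lemma psiK_tcls l1 l2 : psiK (tcls (@id (rmod_of A)) l1) (tcls (@id (rmod_of A)) l2) =
  tcls (@id (rmod_of B)) (S := ralg_of K) [seq ((psi p.1 q.1 : rmod_of B), (p.2 * q.2 : ralg_of K)) | p <- l1, q <- l2].
Proof. exact: (psiS_tcls hpsi K_HmD1 K_HmD2 K_HmZ1 K_HmZ2). Qed.

Lemma psiK_tt a k c k' : psiK (tt a k) (tt c k') = tt (psi a c) (k * k').
Proof. by rewrite /tt psiK_tcls. Qed.

Definition pl (l1 l2 : seq (rmod_of A * ralg_of K)) : seq (rmod_of B * ralg_of K) :=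
  [seq ((psi p.1 q.1 : rmod_of B), (p.2 * q.2 : ralg_of K)) | p <- l1, q <- l2].
Definition mapr (V : lmodType Phi) (r : K) (l : seq (rmod_of V * ralg_of K)) : seq (rmod_of V * ralg_of K) :=
  map (fun p => (p.1, (r * p.2 : ralg_of K))) l.

Local Notation tcA l := (tcls (@id (rmod_of A)) (S := ralg_of K) l : TK A K).
Local Notation tcB l := (tcls (@id (rmod_of B)) (S := ralg_of K) l : TK B K).

Lemma psiK_bil : bilinear_map psiK.
Proof.
split.
- move=> a r c c'; case: (tind a) => la ->; case: (tind c) => lc ->; case: (tind c') => lc' ->.
  have L : psiK (tcA la) (r *: tcA lc + tcA lc') =
      tcB (pl la (mapr r lc ++ lc')).
    by rewrite TK_scaleE tscaleS_tcls TK_addE tadd_tcls psiK_tcls.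
  have Rr : r *: psiK (tcA la) (tcA lc) + psiK (tcA la) (tcA lc') =
      tcB (mapr r (pl la lc) ++ pl la lc').
    by rewrite !psiK_tcls TK_scaleE tscaleS_tcls TK_addE tadd_tcls.
  rewrite L Rr /pl /mapr.
  apply: tcls_eq => M f hf; rewrite big_cat !big_map !big_allpairs_dep /= -big_split /=.
  apply: eq_bigr => p _; rewrite big_cat big_map /=; congr (_ + _); apply: eq_bigr => q _.
  by rewrite mulrCA.
- move=> c r a a'; case: (tind a) => la ->; case: (tind a') => la' ->; case: (tind c) => lc ->.
  have L : psiK (r *: tcA la + tcA la') (tcA lc) =
      tcB (pl (mapr r la ++ la') lc).
    by rewrite TK_scaleE tscaleS_tcls TK_addE tadd_tcls psiK_tcls.
  have Rr : r *: psiK (tcA la) (tcA lc) + psiK (tcA la') (tcA lc) =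
      tcB (mapr r (pl la lc) ++ pl la' lc).
    by rewrite !psiK_tcls TK_scaleE tscaleS_tcls TK_addE tadd_tcls.
  rewrite L Rr /pl /mapr.
  apply: tcls_eq => M f hf; rewrite !big_cat !big_map !big_allpairs_dep /= big_cat big_map.
  congr (_ + _); apply: eq_bigr => p _; apply: eq_bigr => q _.
  by rewrite mulrA.
Qed.
End PsiK.

Section Main.
Variables (Phi : comPzRingType) (A B : lmodType Phi) (psi : A -> A -> B) (G : A * B -> Prop)
  (K : comAlgType Phi).
Hypothesis hpsi : bilinear_map psi.
Hypothesis hGa : @almost_vector_group Phi (rmod_of A) (rmod_of B) psi G.
Local Notation AK := (TK A K).
Local Notation BK := (TK B K).
Local Notation psK := (@psiK Phi A B psi K).
Let hpsiK : bilinear_map psK := psiK_bil K hpsi.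
Let q0r := psi0r hpsiK. Let q0l := psi0l hpsiK. Let qDr := psiDr hpsiK. Let qDl := psiDl hpsiK.
Let qZr := psiZr hpsiK. Let qZl := psiZl hpsiK. Let qNr := psiNr hpsiK. Let qNl := psiNl hpsiK.
Let qBr := psiBr hpsiK. Let qBl := psiBl hpsiK.
Local Notation ttA := (@tt Phi A K).
Local Notation ttB := (@tt Phi B K).
Local Notation S0 := (S0 psi G).

Definition GK : rmod_of AK * rmod_of BK -> Prop := @hat Phi (rmod_of A) (rmod_of B) psi G (ralg_of K).

Lemma GK_avg : @almost_vector_group K (rmod_of AK) (rmod_of BK) psK GK.
Proof. exact: (@hat_avg Phi (rmod_of A) (rmod_of B) psi G (ralg_of K)). Qed.

Lemma GK_gen (g : A * B) : G g -> GK (ttA g.1 1, ttB g.2 1).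
Proof. exact: (@hat_gen Phi (rmod_of A) (rmod_of B) psi G (ralg_of K) g). Qed.

Local Notation hatK := (@hat K (rmod_of AK) (rmod_of BK) psK GK (dual K)).

Lemma ttw (a b : B) (k : K) : k *: (ttB a 1 + ttB a 1 - ttB b 1) = ttB (a + a - b) k.
Proof. by rewrite !ttD1 ttN !scalerDr scalerN !ttK mulr1. Qed.

Lemma S0_hatK u v : S0 u v -> forall k, hatK (mk 0 (ttA u k) 0 (ttB v k)).
Proof.
elim => {u v}.
- by move=> k; rewrite !tt0; apply: lie_zero.
- move=> u v u' v' _ IH _ IH' k; rewrite ttD1 ttD1.
  exact: (lie_add hpsiK (IH k) (IH' k)).
- by move=> r u v _ IH k; rewrite !ttZ1; apply: IH.
- move=> g Hg k.
  have := lie_gen1 hpsiK k (GK_gen Hg); rewrite /= (psiK_tt hpsi) mul1r ttw ttK mulr1.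
  exact.
- move=> b Hb k.
  have := lie_gen2 (psi := psK) (g := (ttA 0 1, ttB b 1)) k (GK_gen Hb) (tt0 _ _).
  by rewrite /= ttK mulr1 tt0.
Qed.


Local Notation LR := (lie_rmod (rmod_of A) (rmod_of B)).
Local Notation UU := {x | LieG psi G x}.
Local Notation iotaU := ((fun x : UU => proj1_sig x) : UU -> LR).
Local Notation LT := (LieG_tensor psi G K).

Definition uf (x : UU) : A := (dphi (proj1_sig x).1).2.
Definition vf (x : UU) : B := (dphi (proj1_sig x).2).2.

Lemma pair_add2 (V W : lmodType Phi) (x y : (V * W)%type) : (x + y).2 = x.2 + y.2. Proof. by []. Qed.
Lemma pair_scale2 (V W : lmodType Phi) r (x : (V * W)%type) : (r *: x).2 = r *: x.2. Proof. by []. Qed.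

Lemma uf_bil (M : lmodType Phi) (f : rmod_of A -> ralg_of K -> M) : tbilin (@id (rmod_of A)) f ->
  tbilin (V := LR) iotaU (fun x s => f (uf x) s).
Proof.
move=> hf; split.
- move=> u u' u'' s E; rewrite /uf E /= dphi_add pair_add2; exact: (bil_addl hf).
- move=> r u u' s E; rewrite /uf E /= dphi_scaleR pair_scale2; exact: (bil_scalel hf).
- by move=> u s s'; apply: (bil_addr hf).
- by move=> r u s; apply: (bil_scaler hf).
Qed.

Lemma vf_bil (M : lmodType Phi) (f : rmod_of B -> ralg_of K -> M) : tbilin (@id (rmod_of B)) f ->
  tbilin (V := LR) iotaU (fun x s => f (vf x) s).
Proof.
move=> hf; split.
- move=> u u' u'' s E; rewrite /vf E /= dphi_add pair_add2; exact: (bil_addl hf).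
- move=> r u u' s E; rewrite /vf E /= dphi_scaleR pair_scale2; exact: (bil_scalel hf).
- by move=> u s s'; apply: (bil_addr hf).
- by move=> r u s; apply: (bil_scaler hf).
Qed.

Definition mapU (z : LT) : AK :=
  tcls (@id (rmod_of A)) (S := ralg_of K) (map (fun p => ((uf p.1 : rmod_of A), p.2)) (trep z)).
Definition mapV (z : LT) : BK :=
  tcls (@id (rmod_of B)) (S := ralg_of K) (map (fun p => ((vf p.1 : rmod_of B), p.2)) (trep z)).

Lemma mapU_tcls (l : seq (UU * ralg_of K)) : mapU (tcls iotaU l) =
  tcls (@id (rmod_of A)) (S := ralg_of K) (map (fun p => ((uf p.1 : rmod_of A), p.2)) l).
Proof. apply: tmap_tcls => M f hf; exact: uf_bil. Qed.
Lemma mapV_tcls (l : seq (UU * ralg_of K)) : mapV (tcls iotaU l) =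
  tcls (@id (rmod_of B)) (S := ralg_of K) (map (fun p => ((vf p.1 : rmod_of B), p.2)) l).
Proof. apply: tmap_tcls => M f hf; exact: vf_bil. Qed.

Lemma LT_scale_tcls (k : K) (l : seq (UU * ralg_of K)) : @tscaleS _ _ _ _ (ralg_of K) k (tcls iotaU l) =
  tcls iotaU (map (fun p => (p.1, (k * p.2 : ralg_of K))) l).
Proof.
rewrite /tscaleS; apply: (@tsmap_tcls _ _ _ _ (ralg_of K) (ralg_of K) (fun s : K => k * s)) => /=.
  by move=> s s'; rewrite mulrDr.
by move=> r s; rewrite scalerAr.
Qed.

Lemma mapU_add z z' : mapU (tadd z z') = mapU z + mapU z'.
Proof.
case: (tind z) => l ->; case: (tind z') => l' ->.
by rewrite tadd_tcls !mapU_tcls map_cat TK_addE tadd_tcls.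
Qed.
Lemma mapV_add z z' : mapV (tadd z z') = mapV z + mapV z'.
Proof.
case: (tind z) => l ->; case: (tind z') => l' ->.
by rewrite tadd_tcls !mapV_tcls map_cat TK_addE tadd_tcls.
Qed.
Lemma mapU_scale (k : K) z : mapU (@tscaleS _ _ _ _ (ralg_of K) k z) = k *: mapU z.
Proof.
case: (tind z) => l ->.
by rewrite LT_scale_tcls !mapU_tcls TK_scaleE tscaleS_tcls -!map_comp.
Qed.
Lemma mapV_scale (k : K) z : mapV (@tscaleS _ _ _ _ (ralg_of K) k z) = k *: mapV z.
Proof.
case: (tind z) => l ->.
by rewrite LT_scale_tcls !mapV_tcls TK_scaleE tscaleS_tcls -!map_comp.
Qed.
Lemma mapU_zero : mapU (tzero iotaU (ralg_of K)) = 0.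
Proof. by rewrite tzeroE mapU_tcls. Qed.
Lemma mapV_zero : mapV (tzero iotaU (ralg_of K)) = 0.
Proof. by rewrite tzeroE mapV_tcls. Qed.


Lemma uv_S0 (x : UU) : S0 (uf x) (vf x).
Proof.
case: (Lie_S0 hpsi hGa (proj2_sig x)) => u [v [h E]].
by rewrite /uf /vf; move: E; rewrite /cd => -[-> ->].
Qed.

Definition Im (X : AK) (Y : BK) := exists z : LT, mapU z = X /\ mapV z = Y.

Lemma Im0 : Im 0 0.
Proof. by exists (tzero iotaU (ralg_of K)); rewrite mapU_zero mapV_zero. Qed.
Lemma ImD X Y X' Y' : Im X Y -> Im X' Y' -> Im (X + X') (Y + Y').
Proof. by case=> z [<- <-] [z' [<- <-]]; exists (tadd z z'); rewrite mapU_add mapV_add. Qed.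
Lemma ImZ (k : K) X Y : Im X Y -> Im (k *: X) (k *: Y).
Proof. by case=> z [<- <-]; exists (@tscaleS _ _ _ _ (ralg_of K) k z); rewrite mapU_scale mapV_scale. Qed.
Lemma Im_eq X Y Y' : Im X Y -> Y = Y' -> Im X Y'.
Proof. by move=> h <-. Qed.

Lemma Im_S0 u v k : S0 u v -> Im (ttA u k) (ttB v k).
Proof.
move=> h; pose x : UU := exist _ (mk 0 u 0 v) (S0_lie hpsi h).
exists (tcls iotaU [:: (x, (k : ralg_of K))]); rewrite mapU_tcls mapV_tcls /= /uf /vf /=.
by rewrite !dpsiK.
Qed.

Inductive SpanP : AK -> BK -> Prop :=
 | SP0 : SpanP 0 0
 | SPD X Y X' Y' : SpanP X Y -> SpanP X' Y' -> SpanP (X + X') (Y + Y')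
 | SPZ (k : K) X Y : SpanP X Y -> SpanP (k *: X) (k *: Y)
 | SPt u v k : S0 u v -> SpanP (ttA u k) (ttB v k).

Inductive SpanG : AK -> Prop :=
 | SG0 : SpanG 0
 | SGD X X' : SpanG X -> SpanG X' -> SpanG (X + X')
 | SGZ (k : K) X : SpanG X -> SpanG (k *: X)
 | SGt (g : A * B) k : G g -> SpanG (ttA g.1 k).

Lemma Im_SpanP X Y : Im X Y -> SpanP X Y.
Proof.
case=> z [<- <-]; rewrite /mapU /mapV; elim: (trep z) => [|p l IH] /=.
  exact: SP0.
rewrite tt_cons (tt_cons (A := B)) /=; apply: SPD => //.
exact: SPt (uv_S0 p.1).
Qed.

Lemma SpanP_v X Y : SpanP X Y -> forall k, Im 0 (k *: Y).
Proof.
elim => {X Y}.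
- by move=> k; rewrite scaler0; apply: Im0.
- by move=> X Y X' Y' _ IH _ IH' k; rewrite scalerDr -[0]addr0; apply: ImD.
- by move=> c X Y _ IH k; rewrite scalerA; apply: IH.
- move=> u v k0 h k; rewrite ttK.
  by have := Im_S0 (k * k0) (S0_v hpsi hGa 1 h); rewrite tt0 scale1r.
Qed.

Lemma SpanG_P X : SpanG X -> exists Y, SpanP X Y.
Proof.
elim => {X}.
- by exists 0; apply: SP0.
- by move=> X X' _ [Y hY] _ [Y' hY']; exists (Y + Y'); apply: SPD.
- by move=> k X _ [Y hY]; exists (k *: Y); apply: SPZ.
- by move=> g k Hg; exists (ttB (g.2 + g.2 - psi g.1 g.1) k); apply: SPt; apply: S0_g.
Qed.

Lemma Lc X Y Z : SpanP X Y -> SpanG Z -> forall k, Im 0 (k *: (psK X Z - psK Z X)).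
Proof.
move=> hX hZ; elim: hX => {X Y}.
- by move=> k; rewrite q0l q0r subrr scaler0; apply: Im0.
- move=> X Y X' Y' _ IH _ IH' k.
  have := ImD (IH k) (IH' k); rewrite addr0 => H; apply: Im_eq H _.
  rewrite qDl qDr; modeq.
- move=> c X Y _ IH k.
  have := IH (k * c) => H; apply: Im_eq H _.
  rewrite qZl qZr; modeq.
- move=> u v k1 hS; elim: hZ => {Z}.
  + by move=> k; rewrite q0l q0r subrr scaler0; apply: Im0.
  + move=> Z Z' _ IH _ IH' k.
    have := ImD (IH k) (IH' k); rewrite addr0 => H; apply: Im_eq H _.
    rewrite qDl qDr; modeq.
  + move=> c Z _ IH k.
    have := IH (k * c) => H; apply: Im_eq H _.
    rewrite qZl qZr; modeq.
  + move=> g k2 Hg k.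
    have := Im_S0 (k * (k1 * k2)) (S0_c hpsi hGa hS Hg); rewrite tt0 => H; apply: Im_eq H _.
    rewrite !(psiK_tt hpsi) ttD1 ttN scalerBr !ttK (mulrC k2 k1); by [].
Qed.

Lemma SG_P X : SpanG X -> exists Y, SpanP X Y.
Proof. exact: SpanG_P. Qed.

Lemma Pw (x : AK * BK) : GK x -> SpanG x.1 /\ forall k, Im x.1 (k *: (x.2 + x.2 - psK x.1 x.1)).
Proof.
pose X := fun x : AK * BK => SpanG x.1 /\ forall k, Im x.1 (k *: (x.2 + x.2 - psK x.1 x.1)).
move: x; apply: (@hat_min Phi (rmod_of A) (rmod_of B) psi G (ralg_of K) X).
  move=> g Hg; split; first exact: (SGt 1 Hg).
  move=> k /=.
  have H := ImD (Im_S0 1 (@S0_g _ _ _ psi G g Hg)) (Im_S0 (k - 1) (S0_v hpsi hGa 1 (@S0_g _ _ _ psi G g Hg))).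
  move: H; rewrite tt0 addr0 scale1r -ttD2 [1 + _]addrC subrK => H.
  apply: Im_eq H _.
  by rewrite (psiK_tt hpsi) mul1r ttw.
suff : @almost_vector_group K (rmod_of AK) (rmod_of BK) psK X by [].
split; [split|..].
- split; first exact: SG0.
  by move=> k; rewrite /= q0l addr0 subrr scaler0; apply: Im0.
- move=> x y [Sx Ix] [Sy Iy]; split; first exact: SGD.
  move=> k; case: (SpanG_P Sx) => Y hY.
  have := ImD (ImD (Ix k) (Iy k)) (Lc hY Sy k); rewrite addr0 => H; apply: Im_eq H _.
  rewrite /= ?(qDl, qDr); modeq.
- move=> x [Sx Ix]; split.
    by have := SGZ (-1) Sx; rewrite scaleN1r.
  move=> k; have := ImZ (-1) (Ix k); rewrite scaleN1r => H; apply: Im_eq H _.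
  rewrite /= ?(qNl, qNr, qDl, qDr); modeq.
- move=> l x [Sx Ix]; split; first exact: SGZ.
  move=> k; have := ImZ l (Ix (k * l)) => H; apply: Im_eq H _.
  rewrite /= ?(qZl, qZr); modeq.
- move=> l b [Sx Ix]; split; first exact: SG0.
  move=> k; have := Ix (k * l) => H; apply: Im_eq H _.
  rewrite /= ?(q0l, q0r); modeq.
Qed.


Hypothesis hV2 : (~ exists h : Phi, h * 2 = 1) ->
  forall (y : T (rmod_of B) (ralg_of K)),
     @hat Phi (rmod_of A) (rmod_of B) psi G (ralg_of K)
         (tzero (@id (rmod_of A)) (ralg_of K), y) ->
     exists l : seq (B * K),
       (forall p, List.In p l -> G (0, p.1)) /\ y = @tcls Phi (rmod_of B) _ id (ralg_of K) l.

Lemma I2K (g : rmod_of AK * rmod_of BK) (k : K) : GK g -> g.1 = 0 -> Im 0 (k *: g.2).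
Proof.
move=> Hg E; case: (lem (exists h : Phi, h * 2 = 1)) => [[h hh]|nh].
- have := (Pw Hg).2 (k * (h *: 1)); rewrite E q0l subr0 => H; apply: Im_eq H _.
  have hh' : h + h = 1 by rewrite -hh mulr_natr mulr2n.
  by rewrite -scalerA scalerDr -scalerDl -scalerDl hh' !scale1r.
- case: g Hg E => g1 g2 /= Hg E; rewrite E in Hg.
  case: (hV2 nh Hg) => l [Hl ->].
  elim: l Hl => [|p l IH] Hl.
    by rewrite scaler0; apply: Im0.
  rewrite (tt_cons (A := B)) scalerDr ttK -[0]addr0; apply: ImD.
    have := Im_S0 (k * p.2) (@S0_b _ _ _ psi G p.1 (Hl p (or_introl erefl))).
    by rewrite tt0.
  by apply: IH => q hq; apply: Hl; right.
Qed.

Definition hmap (z : LT) : LieGK_rmod A B K := (dpsi 0 (mapU z), dpsi 0 (mapV z)).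

Lemma hat_h z : @hat K (rmod_of AK) (rmod_of BK) psK GK (dual K) (mk 0 (mapU z) 0 (mapV z)).
Proof.
rewrite /mapU /mapV; elim: (trep z) => [|p l IH] /=.
  exact: lie_zero.
rewrite tt_cons (tt_cons (A := B)) /=.
exact: (lie_add hpsiK (S0_hatK (uv_S0 p.1) p.2) IH).
Qed.

Theorem main_sec :
  exists h : LieG_tensor psi G K -> LieGK_rmod A B K,
    [/\ (forall x y, h (tadd x y) = radd (LieGK_rmod A B K) (h x) (h y)),
        (forall (k : K) x,
           h (@tscaleS Phi _ _ _ (ralg_of K) k x) = rscale (LieGK_rmod A B K) k (h x)),
        (forall x, LieGK psi G K (h x)) &
        (forall y, LieGK psi G K y -> exists x, h x = y)].
Proof.
exists hmap; split.
- move=> x y; rewrite /hmap /=; congr (_, _).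
    apply: (@dphi_inj K AK); rewrite dphi_add !dpsiK mapU_add; congr (_, _); by rewrite /= addr0.
  apply: (@dphi_inj K BK); rewrite dphi_add !dpsiK mapV_add; congr (_, _); by rewrite /= addr0.
- move=> k x; rewrite /hmap /=; congr (_, _).
    apply: (@dphi_inj K AK); rewrite dphi_scaleR !dpsiK mapU_scale; congr (_, _); by rewrite /= scaler0.
  apply: (@dphi_inj K BK); rewrite dphi_scaleR !dpsiK mapV_scale; congr (_, _); by rewrite /= scaler0.
- move=> z; split; first exact: hat_h.
  rewrite /hmap /=; congr (_, _).
    by apply/(@push0P K AK); rewrite dpsiK.
  by apply/(@push0P K BK); rewrite dpsiK.
- move=> y [hy E]; have E1 := f_equal fst E; have E2 := f_equal snd E; simpl in E1, E2.
  have [U [V [hI hc]]] : exists U V, Im U V /\ @cd K AK BK y = ((0, U), (0, V)).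
    apply: (GX_lie hpsiK GK_avg (I := Im)) => //.
    - exact: Im0.
    - by move=> *; apply: ImD.
    - by move=> *; apply: ImZ.
    - move=> u v g h Hg; have := Lc (Im_SpanP h) (Pw Hg).1 1; by rewrite scale1r.
    - by move=> u v k h; apply: SpanP_v (Im_SpanP h) k.
    - move=> g Hg; have := (Pw Hg).2 1; by rewrite scale1r.
    - by move=> g k Hg E0; apply: I2K.
    - by apply/(@push0P K AK).
    - by apply/(@push0P K BK).
  case: hI => z [EU EV]; exists z.
  apply: (@cd_inj K AK BK); rewrite hc /hmap -EU -EV.
  exact: cd_mk.
Qed.

End Main.


Unset Implicit Arguments. Set Strict Implicit.

Theorem lemma1p13 (Phi : comPzRingType) (A B : lmodType Phi) (psi : A -> A -> B)
  (G : A * B -> Prop) (K : comAlgType Phi) :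
  bilinear_map psi -> vector_group psi G ->
  exists h : LieG_tensor psi G K -> LieGK_rmod A B K,
    [/\ (forall x y, h (tadd x y) = radd (LieGK_rmod A B K) (h x) (h y)),
        (forall (k : K) x,
           h (@tscaleS Phi _ _ _ (ralg_of K) k x) = rscale (LieGK_rmod A B K) k (h x)),
        (forall x, LieGK psi G K (h x)) &
        (forall y, LieGK psi G K y -> exists x, h x = y)].
Proof.
move=> hpsi [hGa hV].
exact: (@main_sec Phi A B psi G K hpsi hGa (fun nh => hV nh K)).
Qed.
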